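(* Let $B$ be a singleton board with $n$ columns, and let $M$ be the maximum entry of its $m$-level root vector $\xi_m(B)$. If the first occurrence of $M$ in $\xi_m(B)$ is in position $j$, then $B$ is connected by a sequence of edges in the $m$-level rook equivalence graph $G_m(B)$ to a board $B'$ whose $m$-level root vector $\xi_m(B')$ agrees with $\xi_m(B)$ in the first $j$ positions and is weakly decreasing in the positions $i\ge j$.
   Context: Fix an integer $m>0$. A Ferrers board is given by a weakly increasing sequence of non-negative integers $B=(b_1,\ldots,b_n)$ of column heights (cells in column $i$, rows $1,\ldots,b_i$, of the first quadrant); prepending height-$0$ columns on the left does not change the board, and boards are compared with the same number of columns by such padding. The rows are partitioned into levels: level $t$ consists of rows $(t-1)m+1,\ldots,tm$. An $m$-level rook placement of $k$ rooks is a set of $k$ cells of $B$, no two in the same level or the same column; $r_{k,m}(B)$ is their number, and two boards are $m$-level rook equivalent if they have equal $r_{k,m}$ for all $k\ge0$. For an integer $o$, $\lfloor o\rfloor_m$ is the largest multiple of $m$ that is $\le o$. $B$ is singleton if for each $i<n$, $b_i-\lfloor b_i\rfloor_m\ne0$ implies $\lfloor b_i\rfloor_m<\lfloor b_{i+1}\rfloor_m$. The $m$-level root vector of $B$ is $\xi_m(B)=\langle 0-b_1,m-b_2,\ldots,m(n-1)-b_n\rangle$. The $m$-level rook equivalence graph $G_m(B)$ of a singleton board $B$ has as vertices all singleton boards $m$-level rook equivalent to $B$, and $\{B_1,B_2\}$ is an edge iff, written with the same number of columns, $B_1$ and $B_2$ differ in exactly two columns $i,j$, where $B_1$ has $k$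 more cells than $B_2$ in column $i$ and $k$ fewer in column $j$, for some $k>0$. *)

(* Defs.v *)
From mathcomp Require Import all_boot all_order all_algebra.
Set Implicit Arguments. Unset Strict Implicit. Unset Printing Implicit Defensive.
Import GRing.Theory Num.Theory.

(* A board is represented by the sequence of its column heights
   B = [:: b_1; ...; b_n] (0-indexed in Rocq: column i is nth 0 B i). *)
Definition is_board (B : seq nat) : Prop := sorted leq B.

Definition bheight (B : seq nat) : nat := \max_(b <- B) b.

(* Cells of B: pairs (i, r) with column i < size B and 0-indexed row r,
   meaning the row r+1, with r+1 <= b_i.  Row r+1 lies in level r %/ m + 1. *)
Definition cell_in (B : seq nat) (c : 'I_(size B) * 'I_(bheight B)) : bool :=
  (c.2 : nat) < nth 0 B c.1.

Definition level_placement (m : nat) (B : seq nat)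
    (P : {set 'I_(size B) * 'I_(bheight B)}) : bool :=
  [forall c in P, @cell_in B c] &&
  [forall c in P, forall d in P,
     (c != d) ==> ((c.1 != d.1) && ((c.2 : nat) %/ m != (d.2 : nat) %/ m))].

Definition rook_num (k m : nat) (B : seq nat) : nat :=
  #|[set P : {set 'I_(size B) * 'I_(bheight B)} |
       (#|P| == k) && @level_placement m B P]|.

Definition rook_equiv (m : nat) (B1 B2 : seq nat) : Prop :=
  forall k, rook_num k m B1 = rook_num k m B2.

Definition floorm (m o : nat) : nat := o - o %% m.

Definition singleton (m : nat) (B : seq nat) : Prop :=
  forall i, i.+1 < size B ->
    nth 0 B i - floorm m (nth 0 B i) != 0 ->
    floorm m (nth 0 B i) < floorm m (nth 0 B i.+1).

(* m-level root vector: xi_i = m*i - b_{i+1} (0-indexed i). *)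
Definition root_vec (m : nat) (B : seq nat) : seq int :=
  [seq ((m * i)%:Z - (nth 0 B i)%:Z)%R | i <- iota 0 (size B)].

Definition pad (L : nat) (B : seq nat) : seq nat := nseq (L - size B) 0 ++ B.

(* Edge of the rook equivalence graph: written with the same number of
   columns, B1 and B2 differ in exactly two columns i, j, with B1 having
   k > 0 more cells in column i and k fewer in column j. *)
Definition graph_edge (B1 B2 : seq nat) : Prop :=
  let L := maxn (size B1) (size B2) in
  let p1 := pad L B1 in let p2 := pad L B2 in
  exists i j k, [/\ i < L, j < L, i != j & 0 < k] /\
    [/\ nth 0 p1 i = nth 0 p2 i + k, nth 0 p2 j = nth 0 p1 j + k &
    forall l, l < L -> l != i -> l != j -> nth 0 p1 l = nth 0 p2 l].

Definition graph_vertex (m : nat) (B C : seq nat) : Prop :=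
  [/\ is_board C, singleton m C & rook_equiv m B C].

Inductive connected (V : seq nat -> Prop) (E : seq nat -> seq nat -> Prop)
  : seq nat -> seq nat -> Prop :=
| conn_refl x : V x -> connected V E x x
| conn_step x y z : V x -> E x y -> connected V E y z -> connected V E x z.

(* Main.v *)
Require Import Defs.
From mathcomp Require Import all_boot all_order all_algebra all_fingroup.
From mathcomp Require Import zify ring lra.
Import Order.TTheory GRing.Theory Num.Theory.
Set Implicit Arguments. Unset Strict Implicit. Unset Printing Implicit Defensive.


Lemma sorted_nthP (B : seq nat) : is_board B ->
  forall i j, i <= j -> j < size B -> nth 0 B i <= nth 0 B j.
Proof.
move=> sB i j ij js.
have := @sorted_leq_nth _ leq leq_trans leqnn 0 B sB i j.
rewrite !inE => H; apply: H => //; exact: leq_ltn_trans ij js.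
Qed.

Lemma lvl_next m (B : seq nat) i r : 0 < m -> is_board B -> singleton m B ->
  i.+1 < size B -> r < nth 0 B i -> m * (r %/ m).+1 <= nth 0 B i.+1.
Proof.
move=> m0 sB sgB iS rlt.
have cd : nth 0 B i <= nth 0 B i.+1 by apply: sorted_nthP.
move: (sgB i iS); rewrite /floorm.
set c := nth 0 B i in rlt cd *; set d := nth 0 B i.+1 in cd *.
have ec := divn_eq c m; have ed := divn_eq d m.
have hc := ltn_pmod c m0; have hd := ltn_pmod d m0.
have er := divn_eq r m; have hr := ltn_pmod r m0.
have rq : r %/ m <= c %/ m by apply: leq_div2r; apply: ltnW.
case: (posnP (c %% m)) => [c0|cpos] H.
- have : r %/ m < c %/ m.
    rewrite ltnNge; apply/negP => le.
    have : c %/ m * m <= r %/ m * m by rewrite leq_mul2r le orbT.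
    nia.
  nia.
- have H2 : c - c %% m < d - d %% m by apply: H; nia.
  have : c %/ m < d %/ m.
    rewrite ltnNge; apply/negP => le.
    have : d %/ m * m <= c %/ m * m by rewrite leq_mul2r le orbT.
    nia.
  nia.
Qed.

Lemma lvl_last m (B0 : seq nat) b i r : 0 < m -> is_board (rcons B0 b) ->
  singleton m (rcons B0 b) -> i < size B0 -> r < nth 0 B0 i -> m * (r %/ m).+1 <= b.
Proof.
move=> m0 sB sgB iS rlt.
have iS' : i.+1 < size (rcons B0 b) by rewrite size_rcons ltnS.
have := lvl_next m0 sB sgB iS'; rewrite nth_rcons iS => /(_ _ rlt) h.
apply: leq_trans h _.
have := sorted_nthP sB (i:=i.+1) (j:=size B0) iS.
rewrite size_rcons ltnSn => /(_ isT).
rewrite [X in _ <= X]nth_rcons ltnn eqxx.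
by rewrite nth_rcons; case: ltnP => //; case: eqP.
Qed.

Lemma card_sumb H (A : pred 'I_H) : #|[set r | A r]| = \sum_(r : 'I_H) (A r : nat).
Proof.
rewrite -sum1_card big_mkcond /=; apply: eq_bigr => i _; rewrite inE; by case: (A i).
Qed.

Lemma sum_ord_nat H (f : nat -> nat) : \sum_(r : 'I_H) f r = \sum_(0 <= r < H) f r.
Proof. by rewrite big_mkord. Qed.

Lemma sum_lt H b : b <= H -> \sum_(r : 'I_H) ((r : nat) < b : nat) = b.
Proof.
move=> bH; rewrite (sum_ord_nat H (fun r => (r < b : nat))).
rewrite (big_cat_nat _ (n:=b)) //=.
rewrite [\sum_(b <= i < H) _]big1_seq ?addn0; last first.
  move=> i /andP[_]; rewrite mem_index_iota => /andP[h _].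
  by rewrite ltnNge h.
rewrite (eq_big_nat _ _ (F2 := fun _ => 1)); last by move=> i /andP[_ ->].
by rewrite sum_nat_const_nat subn0 muln1.
Qed.

Lemma sum_lvl H m l : 0 < m -> m * l.+1 <= H ->
  \sum_(r : 'I_H) (((r : nat) %/ m == l) : nat) = m.
Proof.
move=> m0 lH; rewrite (sum_ord_nat H (fun r => ((r %/ m == l) : nat))).
rewrite (big_cat_nat _ (n:=m * l)) //=; last by nia.
rewrite (big_cat_nat _ (m:= m * l) (n:=m * l.+1)) //=; last by nia.
rewrite [\sum_(0 <= i < m * l) _]big1_seq; last first.
  move=> i /andP[_]; rewrite mem_index_iota => /andP[_ h].
  have : i %/ m < l by have := divn_eq i m; have := ltn_pmod i m0; nia.
  by case: eqP => // ->; rewrite ltnn.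
rewrite [\sum_(m * l.+1 <= i < H) _]big1_seq; last first.
  move=> i /andP[_]; rewrite mem_index_iota => /andP[h _].
  have : l < i %/ m by have := divn_eq i m; have := ltn_pmod i m0; nia.
  by case: eqP => // ->; rewrite ltnn.
rewrite (eq_big_nat _ _ (F2 := fun _ => 1)).
  by rewrite sum_nat_const_nat; nia.
move=> i /andP[h1 h2]; apply/eqP; rewrite eqb1; apply/eqP.
have := divn_eq i m; have := ltn_pmod i m0; nia.
Qed.

Section Count.
Variables (N H m : nat).
Local Notation T := ('I_N * 'I_H)%type.

Definition gplace (B : seq nat) (P : {set T}) : bool :=
  [forall c in P, (c.2 : nat) < nth 0 B c.1] &&
  [forall c in P, forall d in P,
     (c != d) ==> ((c.1 != d.1) && ((c.2 : nat) %/ m != (d.2 : nat) %/ m))].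

Definition S k B := [set P : {set T} | (#|P| == k) && gplace B P].
Definition grn k B := #|S k B|.

Lemma gplaceP B (P : {set T}) : reflect
  ((forall c, c \in P -> (c.2 : nat) < nth 0 B c.1) /\
   (forall c d, c \in P -> d \in P -> c != d -> (c.1 != d.1) /\ ((c.2 : nat) %/ m != (d.2 : nat) %/ m)))
  (gplace B P).
Proof.
apply: (iffP andP) => [[/forall_inP h1 /forall_inP h2]|[h1 h2]]; split.
- exact: h1.
- move=> c d cP dP cd; have /forall_inP := h2 c cP => /(_ d dP) /implyP /(_ cd) /andP[] //.
- by apply/forall_inP.
- apply/forall_inP => c cP; apply/forall_inP => d dP; apply/implyP => cd.
  by have [-> ->] := h2 c d cP dP cd.
Qed.

Lemma grn0 B : grn 0 B = 1.
Proof.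
rewrite /grn (_ : S 0 B = [set set0]) ?cards1 //.
apply/setP => P; rewrite !inE; apply/andP/eqP => [[/eqP/cards0_eq //]|->].
by rewrite cards0; split => //; apply/gplaceP; split => [c|c d]; rewrite inE.
Qed.

Lemma grn_nil k : grn k.+1 [::] = 0.
Proof.
apply/eqP; rewrite cards_eq0; apply/eqP/setP => P; rewrite !inE.
apply/negbTE/negP => /andP[/eqP cP /gplaceP[h1 _]].
have : 0 < #|P| by rewrite cP.
by rewrite card_gt0 => /set0Pn[c /h1]; rewrite nth_nil.
Qed.

End Count.


Section Rec.
Variables (N H m : nat) (B0 : seq nat) (b : nat).
Hypotheses (m0 : 0 < m) (nN : size B0 < N) (bH : b <= H)
  (sB : is_board (rcons B0 b)) (sgB : singleton m (rcons B0 b)).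
Local Notation T := ('I_N * 'I_H)%type.
Local Notation n := (size B0).
Local Notation B := (rcons B0 b).
Local Notation S := (S N H m).

Lemma nthB i : i != n -> nth 0 B i = nth 0 B0 i.
Proof.
rewrite nth_rcons; case: ltnP => // h; rewrite eq_sym => /negbTE ->.
by rewrite nth_default.
Qed.

Definition colset : {set T} := [set c : T | (c.1 : nat) == n].
Definition Xs : {set {set T}} := [set P : {set T} | P :&: colset != set0].
Definition res (P : {set T}) := P :\: colset.

Lemma cellB0 (P : {set T}) k c : P \in S k B0 -> c \in P ->
  (c.1 : nat) < n /\ (c.2 : nat) < nth 0 B0 c.1.
Proof.
rewrite inE => /andP[_ /gplaceP[h1 _]] /h1 h; split => //.
move: h; case: (ltnP c.1 n) => // h'; rewrite nth_default //.
Qed.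

Lemma gplace_B0 (P : {set T}) : (forall c, c \in P -> (c.1 : nat) != n) ->
  gplace m B P = gplace m B0 P.
Proof.
move=> h; rewrite /gplace; congr andb; apply: eq_forallb_in => c cP.
by rewrite nthB // h.
Qed.

Lemma noncol (P : {set T}) : (P :&: colset == set0) = [forall c in P, (c.1 : nat) != n].
Proof.
apply/eqP/forall_inP => [h c cP|h].
  apply/negP => e; have : c \in P :&: colset by rewrite !inE cP e.
  by rewrite h inE.
apply/setP => c; rewrite !inE; apply/andP => -[cP e].
by move: (h c cP); rewrite e.
Qed.

Lemma part1 k : S k B :\: Xs = S k B0.
Proof.
apply/setP => P; apply/idP/idP.
  rewrite !inE negbK noncol => /andP[/forall_inP h /andP[-> g]]; by rewrite -gplace_B0.
move=> PS; have hc : forall c, c \in P -> (c.1 : nat) != n.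
  by move=> c cP; have [h _] := cellB0 PS cP; rewrite neq_ltn h.
move: PS; rewrite !inE negbK noncol => /andP[-> g]; rewrite gplace_B0 // g !andbT.
by apply/forall_inP.
Qed.


Definition nn : 'I_N := Ordinal nN.
Definition inL (P0 : {set T}) (r : 'I_H) := [exists c in P0, (c.2 : nat) %/ m == (r : nat) %/ m].
Definition Rset (P0 : {set T}) := [set r : 'I_H | ((r : nat) < b) && ~~ inL P0 r].

Lemma lvlB0 (P0 : {set T}) k c : P0 \in S k B0 -> c \in P0 -> m * ((c.2 : nat) %/ m).+1 <= b.
Proof.
move=> PS cP; have [h1 h2] := cellB0 PS cP.
exact: (lvl_last m0 sB sgB h1 h2).
Qed.

Lemma distinct (P0 : {set T}) k c d : P0 \in S k B0 -> c \in P0 -> d \in P0 -> c != d ->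
  (c.1 != d.1) /\ ((c.2 : nat) %/ m != (d.2 : nat) %/ m).
Proof. by rewrite inE => /andP[_ /gplaceP[_ h]]; apply: h. Qed.

Lemma sum_inL (P0 : {set T}) k : P0 \in S k B0 -> \sum_(r : 'I_H) (inL P0 r : nat) = m * k.
Proof.
move=> PS.
have e : forall r, (inL P0 r : nat) = \sum_(c in P0) (((c.2 : nat) %/ m == (r : nat) %/ m) : nat).
  move=> r; case: (boolP (inL P0 r)) => [/exists_inP[c0 c0P /eqP e0]|nL].
    rewrite (bigD1 c0) //= e0 eqxx big1 // => c /andP[cP cc0].
    have [_ h] := distinct PS cP c0P cc0.
    by rewrite -e0 (negbTE h).
  rewrite big1 // => c cP; apply/eqP; rewrite eqb0; apply/negP => ec.
  by move: nL; apply/negP/negPn/exists_inP; exists c.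
rewrite (eq_bigr _ (fun r _ => e r)) exchange_big /=.
rewrite (eq_bigr (fun _ => m)); last first.
  move=> c cP.
  rewrite (eq_bigr (fun r : 'I_H => (((r : nat) %/ m == (c.2 : nat) %/ m) : nat))).
    apply: sum_lvl => //; exact: leq_trans (lvlB0 PS cP) bH.
  by move=> r _; rewrite eq_sym.
rewrite sum_nat_const; move: PS; rewrite inE => /andP[/eqP -> _]; by rewrite mulnC.
Qed.

Lemma card_Rset (P0 : {set T}) k : P0 \in S k B0 -> #|Rset P0| + m * k = b.
Proof.
move=> PS; rewrite /Rset (@card_sumb H (fun r : 'I_H => (((r:nat) < b) && ~~ inL P0 r))) -(sum_inL PS) -big_split /=.
rewrite -[RHS](sum_lt bH); apply: eq_bigr => r _.
case: (boolP (inL P0 r)) => [/exists_inP[c cP /eqP ec]|_]; last by rewrite addn0 andbT.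
have := lvlB0 PS cP; rewrite ec => h.
have : (r : nat) < b by have := divn_eq r m; have := ltn_pmod r m0; nia.
by move=> ->.
Qed.

Lemma col_unique (P : {set T}) k c0 : P \in S k B -> c0 \in P :&: colset ->
  P :&: colset = [set c0].
Proof.
rewrite inE => /andP[_ /gplaceP[_ h]] c0P; apply/setP => c; rewrite in_set1.
apply/idP/eqP => [cP|->] //; apply/eqP; apply: contraT => cc0.
move: cP c0P; rewrite !inE => /andP[cP /eqP e1] /andP[c0P /eqP e2].
have [h1 _] := h c c0 cP c0P cc0.
by move: h1; rewrite -(inj_eq val_inj) /= e1 e2 eqxx.
Qed.

Lemma res_in (P : {set T}) k : P \in S k.+1 B :&: Xs -> res P \in S k B0.
Proof.
rewrite inE => /andP[PS]; rewrite inE => /set0Pn[c0 c0P].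
have e := col_unique PS c0P.
move: (PS); rewrite inE => /andP[/eqP cP /gplaceP[h1 h2]].
rewrite inE; apply/andP; split.
  have := cardsID colset P; rewrite e cards1 cP add1n => -[->] //.
apply/gplaceP; split.
  move=> c; rewrite /res inE => /andP[cn cP']; rewrite -nthB; first exact: h1.
  by move: cn; rewrite inE.
move=> c d; rewrite /res !inE => /andP[_ cP'] /andP[_ dP']; exact: h2.
Qed.

Lemma fiber (P0 : {set T}) k : P0 \in S k B0 ->
  [set P in S k.+1 B :&: Xs | res P == P0] = (fun r => (nn, r) |: P0) @: Rset P0.
Proof.
move=> P0S; have P0n : forall c, c \in P0 -> (c.1 : nat) < n.
  by move=> c cP; have [] := cellB0 P0S cP.
move: (P0S); rewrite inE => /andP[/eqP P0k /gplaceP[g1 g2]].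
apply/setP => P; rewrite inE; apply/andP/imsetP.
- move=> [PA /eqP resP].
  move: (PA); rewrite inE => /andP[PS]; rewrite inE => /set0Pn[c0 c0P].
  have e := col_unique PS c0P.
  move: (PS); rewrite inE => /andP[/eqP cP /gplaceP[h1 h2]].
  move: (c0P); rewrite !inE => /andP[c0in /eqP c0n].
  have c0e : c0 = (nn, c0.2).
    by case: c0 c0n {c0in c0P e} => a r /= an; congr pair; apply: val_inj.
  have eP : P = (nn, c0.2) |: P0.
    apply/setP => c; rewrite in_setU1 -c0e -resP /res inE.
    case: (boolP (c \in colset)) => cc /=.
      have : (c \in P :&: colset) = (c == c0) by rewrite e in_set1.
      by rewrite inE cc andbT => ->; case: eqP => // ->.
    rewrite orb_idl // => /eqP ec.
    by move: cc; rewrite ec inE c0n eqxx.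
  exists c0.2 => //; rewrite inE; apply/andP; split.
    by have := h1 c0 c0in; rewrite c0n nth_rcons ltnn eqxx.
  apply/exists_inP => -[c cP0 /eqP el].
  have cP' : c \in P by rewrite eP in_setU1 cP0 orbT.
  have cc0 : c != c0 by apply/eqP => ec; move: (P0n c cP0); rewrite ec c0n ltnn.
  by have [_] := h2 c c0 cP' c0in cc0; rewrite el eqxx.
- move=> [r]; rewrite inE => /andP[rb nL] ->.
  have nP0 : (nn, r) \notin P0 by apply/negP => /P0n; rewrite /= ltnn.
  split; last first.
    apply/eqP/setP => c; rewrite /res !inE.
    case: (boolP (c \in P0)) => cP0.
      by rewrite orbT andbT (ltn_eqF (P0n c cP0)).
    rewrite orbF; case: (c =P (nn, r)) => [ce|]; last by rewrite andbF.
    by rewrite ce /= eqxx.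
  rewrite !inE; apply/andP; split.
    rewrite cardsU1 nP0 P0k add1n eqxx /=; apply/gplaceP; split.
      move=> c; rewrite in_setU1 => /orP[/eqP -> /=|cP0].
        by rewrite nth_rcons ltnn eqxx.
      by rewrite nthB ?(ltn_eqF (P0n c cP0)) //; apply: g1.
    have key : forall c, c \in P0 -> (c.1 != nn) /\ ((c.2 : nat) %/ m != r %/ m).
      move=> c cP0; split.
        by rewrite -(inj_eq val_inj) /= (ltn_eqF (P0n c cP0)).
      by apply/negP => /eqP el; move: nL; apply/negP/negPn/exists_inP; exists c => //; rewrite el.
    move=> c d; rewrite !in_setU1 => /orP[/eqP ->|cP0] /orP[/eqP ->|dP0].
    + by rewrite eqxx.
    + by move=> _; have [k1 k2] := key d dP0; rewrite eq_sym k1 eq_sym k2.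
    + by move=> _; have [k1 k2] := key c cP0; rewrite k1 k2.
    + exact: g2.
  apply/set0Pn; exists (nn, r); rewrite !inE eqxx /=; done.
Qed.

Lemma grn_rec k : grn N H m k.+1 B = grn N H m k.+1 B0 + (b - m * k) * grn N H m k B0.
Proof.
rewrite /grn -(cardsID Xs (S k.+1 B)) part1 addnC; congr addn.
rewrite -sum1_card (partition_big res (mem (S k B0))); last first.
  by move=> P; apply: res_in.
rewrite (eq_bigr (fun _ => b - m * k)); last first.
  move=> P0 P0S.
  transitivity #|[set P in S k.+1 B :&: Xs | res P == P0]|.
    by rewrite -sum1_card; apply: eq_bigl => P; rewrite !inE.
  rewrite fiber // card_imset; last first.
    by move=> r1 r2 /setP /(_ (nn, r1)); rewrite !in_setU1 eqxx /= => /esym /orP[/eqP [] ->|/(cellB0 P0S) [] ]; rewrite //= ltnn.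
  by have := card_Rset P0S; move=> <-; rewrite addnK.
by rewrite sum_nat_const mulnC.
Qed.

Lemma grn_bound k : grn N H m k B0 = 0 \/ m * k <= b.
Proof.
case: (posnP (grn N H m k B0)) => [->|]; first by left.
rewrite card_gt0 => /set0Pn[P0 P0S]; right.
by rewrite -(card_Rset P0S) leq_addl.
Qed.

End Rec.


Section GPart.
Local Open Scope ring_scope.

Definition ff (m : nat) (x : int) (d : nat) : int := \prod_(0 <= l < d) (x - (l * m)%:Z).
Definition xi (m : nat) (B : seq nat) (i : nat) : int := (m * i)%:Z - (nth 0%N B i)%:Z.

Lemma ffS m x d : ff m x d.+1 = ff m x d * (x - (d * m)%:Z).
Proof. by rewrite /ff big_nat_recr. Qed.

Lemma ff_zero m t d : (t < d)%N -> ff m (t * m)%:Z d = 0.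
Proof.
elim: d => // d IH h; rewrite ffS; move: h.
rewrite ltnS leq_eqVlt => /orP[/eqP ->|/IH ->]; last by rewrite mul0r.
by rewrite subrr mulr0.
Qed.

Lemma ff_nz m t d : (0 < m)%N -> (d <= t)%N -> ff m (t * m)%:Z d != 0.
Proof.
move=> m0; elim: d => [|d IH] dt; first by rewrite /ff big_geq.
rewrite ffS mulf_neq0 ?IH ?(ltnW dt) // subr_eq0 eqz_nat eqn_mul2r negb_or -lt0n m0 /=.
by rewrite neq_ltn dt orbT.
Qed.

Lemma tri (m n : nat) (a c : nat -> int) : (0 < m)%N ->
  (forall t : nat, \sum_(0 <= d < n.+1) a d * ff m (t * m)%:Z d =
                   \sum_(0 <= d < n.+1) c d * ff m (t * m)%:Z d) ->
  forall d, (d <= n)%N -> a d = c d.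
Proof.
move=> m0 h; elim/ltn_ind => d IH dn.
have := h d; move/eqP; rewrite -subr_eq0 -sumrB.
rewrite (eq_bigr (fun i => (a i - c i) * ff m (d * m)%:Z i)); last by move=> i _; rewrite mulrBl.
rewrite (big_cat_nat _ (n:=d)) //=; last by rewrite ltnW.
rewrite (big_cat_nat _ (m:=d) (n:=d.+1)) //= big_nat1.
rewrite [\sum_(0 <= i < d) _]big1_seq; last first.
  move=> i /andP[_]; rewrite mem_index_iota => /andP[_ hi].
  by rewrite IH ?subrr ?mul0r // (leq_trans (ltnW hi) dn).
rewrite [\sum_(d.+1 <= i < n.+1) _]big1_seq; last first.
  move=> i /andP[_]; rewrite mem_index_iota => /andP[hi _].
  by rewrite ff_zero ?mulr0.
rewrite add0r addr0 mulf_eq0 (negbTE (@ff_nz m d d m0 (leqnn d))) orbF subr_eq0.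
by move/eqP.
Qed.

Lemma sub_board (B0 : seq nat) b : is_board (rcons B0 b) -> is_board B0.
Proof.
move=> /(sortedP 0) h; apply/(sortedP 0) => i hi.
have := h i; rewrite size_rcons !nth_rcons hi (ltn_trans _ hi) //.
by apply; apply: ltn_trans hi _.
Qed.

Lemma sub_single m (B0 : seq nat) b : singleton m (rcons B0 b) -> singleton m B0.
Proof.
move=> h i hi; have := h i; rewrite size_rcons !nth_rcons hi (ltn_trans _ hi) //.
by apply; apply: ltn_trans hi _.
Qed.

Section Gsec.
Variables (N H m : nat).
Hypothesis m0 : (0 < m)%N.

Definition Gs (B : seq nat) (x : int) : int :=
  \sum_(0 <= k < (size B).+1) (grn N H m k B)%:Z * ff m x (size B - k).

Definition okB (B : seq nat) := [/\ is_board B, singleton m B, (size B <= N)%N &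
  forall i, (nth 0 B i <= H)%N].

Lemma okB_rcons B0 b : okB (rcons B0 b) ->
  [/\ okB B0, (size B0 < N)%N, (b <= H)%N, is_board (rcons B0 b) & singleton m (rcons B0 b)].
Proof.
case=> sB sgB sN hH; split => //.
- split; [exact: sub_board sB|exact: sub_single sgB| |].
    by apply: leq_trans sN; rewrite size_rcons.
  move=> i; case: (ltnP i (size B0)) => hi; last by rewrite nth_default.
  by have := hH i; rewrite nth_rcons hi.
- by move: sN; rewrite size_rcons.
- by have := hH (size B0); rewrite nth_rcons ltnn eqxx.
Qed.

Lemma grn_zero B : okB B -> forall k, (size B < k)%N -> grn N H m k B = 0%N.
Proof.
elim/last_ind: B => [_ [|k] //|B0 b IH /okB_rcons [ok0 nN bH sB sgB] [|k] //].
  by rewrite grn_nil.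
rewrite size_rcons ltnS => hk.
rewrite (grn_rec m0 nN bH sB sgB) !IH // ?muln0 //; exact: leqW.
Qed.

Lemma Gprod B x : okB B -> Gs B x = \prod_(0 <= i < size B) (x - xi m B i).
Proof.
elim/last_ind: B => [_|B0 b IH /okB_rcons [ok0 nN bH sB sgB]].
  by rewrite /Gs big_nat1 big_geq //= grn0 mul1r /ff big_geq.
set n := size B0.
have xiB : forall i, (i < n)%N -> xi m (rcons B0 b) i = xi m B0 i.
  by move=> i hi; rewrite /xi nth_rcons hi.
rewrite size_rcons big_nat_recr //= -/n.
rewrite (eq_big_nat _ _ (F2 := fun i => x - xi m B0 i)); last first.
  by move=> i /andP[_ hi]; rewrite xiB.
rewrite -IH // /Gs size_rcons -/n.
have xn : xi m (rcons B0 b) n = (m * n)%:Z - b%:Z by rewrite /xi nth_rcons ltnn eqxx.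
rewrite xn.
rewrite big_nat_recl //= grn0 mul1r subn0.
rewrite (eq_big_nat _ _ (F2 := fun k => (grn N H m k.+1 B0)%:Z * ff m x (n - k) +
   (grn N H m k B0)%:Z * ff m x (n - k) * (b%:Z - (m * k)%:Z))); last first.
  move=> k /andP[_ hk]; rewrite (grn_rec m0 nN bH sB sgB) subSS PoszD PoszM mulrDl.
  congr (_ + _).
  case: (grn_bound m0 nN bH sB sgB k) => [->|mk].
    by rewrite !mulr0 !mul0r.
  rewrite -subzn //; ring.
rewrite big_split /=.
rewrite big_nat_recr //= (grn_zero ok0 (k:=n.+1)) // mul0r addr0.
rewrite mulr_suml.
rewrite [RHS](eq_big_nat _ _ (F2 := fun k => (grn N H m k B0)%:Z * ff m x (n.+1 - k) +
   (grn N H m k B0)%:Z * ff m x (n - k) * (b%:Z - (m * k)%:Z))); last first.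
  move=> k /andP[_ hk]; rewrite subSn // ffS.
  have e : (((n - k) * m)%N : int) = (n * m)%:Z - (k * m)%:Z.
    by rewrite mulnBl subzn // leq_mul2r -ltnS hk orbT.
  rewrite e !PoszM; ring.
rewrite big_split /= addrA; congr (_ + _).
by rewrite big_nat_recl //= grn0 mul1r subn0.
Qed.

End Gsec.

Lemma nth_bheight (B : seq nat) i : (nth 0 B i <= bheight B)%N.
Proof.
case: (ltnP i (size B)) => hi; last by rewrite nth_default.
by rewrite /bheight; apply: (leq_bigmax_seq (F := id)) => //; apply: mem_nth.
Qed.

Lemma rook_grn k m B : rook_num k m B = grn (size B) (bheight B) m k B.
Proof. by []. Qed.

Lemma Gs_rev N H m B x : Gs N H m B x =
  \sum_(0 <= d < (size B).+1) (grn N H m (size B - d)%N B)%:Z * ff m x d.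
Proof.
rewrite /Gs big_nat_rev /=; apply: eq_big_nat => d /andP[_ hd].
by rewrite add0n subSS subKn // -ltnS.
Qed.

Lemma RE m C D : (0 < m)%N -> is_board C -> singleton m C -> is_board D -> singleton m D ->
  size C = size D ->
  (forall x : int, \prod_(0 <= i < size C) (x - xi m C i) = \prod_(0 <= i < size D) (x - xi m D i)) ->
  rook_equiv m C D.
Proof.
move=> m0 sC sgC sD sgD eS hP k; rewrite !rook_grn.
have okC : okB (size C) (bheight C) m C by split => // i; apply: nth_bheight.
have okD : okB (size D) (bheight D) m D by split => // i; apply: nth_bheight.
case: (ltnP (size C) k) => hk.
  by rewrite !grn_zero // -eS.
set n := size C.
have := @tri m n (fun d => (grn (size C) (bheight C) m (n - d)%N C)%:Z)
                 (fun d => (grn (size D) (bheight D) m (n - d)%N D)%:Z) m0.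
move=> h.
have hh : forall t : nat, \sum_(0 <= d < n.+1) (grn (size C) (bheight C) m (n - d)%N C)%:Z * ff m (t * m)%:Z d =
  \sum_(0 <= d < n.+1) (grn (size D) (bheight D) m (n - d)%N D)%:Z * ff m (t * m)%:Z d.
  move=> t; rewrite /n -(Gs_rev (size C) (bheight C)) (Gprod m0 _ okC) hP eS -(Gprod m0 _ okD) Gs_rev; done.
have := h hh (n - k)%N (leq_subr _ _); rewrite subKn // => -[] //.
Qed.

End GPart.



Definition Rr (m : nat) (x y : int) := forall t : int, (x < t * m%:Z)%R -> (y <= t * m%:Z)%R.

Lemma Rr_le m x y : (y <= x)%R -> Rr m x y.
Proof. by move=> h t ht; apply: ltW; apply: le_lt_trans ht. Qed.

Lemma Rr_l m x x' y : Rr m x y -> (x <= x')%R -> Rr m x' y.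
Proof. by move=> h hx t ht; apply: h; apply: le_lt_trans ht. Qed.

Lemma Rr_r m x y y' : Rr m x y -> (y' <= y)%R -> Rr m x y'.
Proof. by move=> h hy t ht; apply: le_trans hy (h t ht). Qed.

Lemma pair_char m (c d i : nat) : (0 < m)%N ->
  ((c <= d) /\ (c - floorm m c != 0 -> floorm m c < floorm m d)) <->
  Rr m ((m * i)%:Z - c%:Z)%R ((m * i.+1)%:Z - d%:Z)%R.
Proof.
move=> m0.
have ec := divn_eq c m; have hc := ltn_pmod c m0.
have ed := divn_eq d m; have hd := ltn_pmod d m0.
have fc : floorm m c = (c %/ m * m)%N by rewrite /floorm {1}ec addnK.
have fd : floorm m d = (d %/ m * m)%N by rewrite /floorm {1}ed addnK.
have cf : (c - floorm m c = c %% m)%N by rewrite fc {1}ec addKn.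
rewrite cf fc fd.
move: ec ed hc hd; set qc := (c %/ m)%N; set rc := (c %% m)%N; set qd := (d %/ m)%N; set rd := (d %% m)%N.
move=> ec ed hc hd.
split.
- move=> [cd hs] t ht.
  case: (posnP rc) => [rc0|rcp].
  + have qq : (qc <= qd)%N by nia.
    have s1 : (1 <= t - i%:Z + qc%:Z)%R by nia.
    nia.
  + have qq : (qc < qd)%N by have := hs ltac:(by rewrite -lt0n); nia.
    have s0 : (0 <= t - i%:Z + qc%:Z)%R by nia.
    nia.
- move=> h; case: (posnP rc) => [rc0|rcp].
  + have := h (i%:Z - qc%:Z + 1)%R; move=> /(_ _) h1.
    have h2 := h1 ltac:(nia).
    split; [nia | by []].
  + have := h (i%:Z - qc%:Z)%R; move=> /(_ _) h1.
    have h2 := h1 ltac:(nia).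
    split; [nia | move=> _; nia].
Qed.

Lemma char m (C : seq nat) : (0 < m)%N ->
  (is_board C /\ singleton m C) <->
  (forall i, (i.+1 < size C)%N -> Rr m (xi m C i) (xi m C i.+1)).
Proof.
move=> m0; split.
- move=> [sC sgC] i hi; apply/(@pair_char m _ _ _ m0); split.
    by move/(sortedP 0): sC; apply.
  exact: sgC.
- move=> h; split.
    apply/(sortedP 0) => i hi; have := h i hi; rewrite /xi => /(@pair_char m _ _ _ m0) []; done.
  move=> i hi; have := h i hi; rewrite /xi => /(@pair_char m _ _ _ m0) []; done.
Qed.

Definition sw (p q i : nat) : nat := if i == p then q else if i == q then p else i.

Definition swapb m (C : seq nat) p q :=
  set_nth 0 (set_nth 0 C p (nth 0 C q + m * p - m * q)%N) q (nth 0 C p + m * q - m * p)%N.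

Lemma swap_size m C p q : (p < size C)%N -> (q < size C)%N -> size (swapb m C p q) = size C.
Proof.
move=> hp hq; rewrite /swapb !size_set_nth.
by rewrite (maxn_idPr hp) (maxn_idPr hq).
Qed.

Lemma swap_nth m C p q i : (p < q)%N ->
  nth 0 (swapb m C p q) i =
  if i == q then (nth 0 C p + m * q - m * p)%N
  else if i == p then (nth 0 C q + m * p - m * q)%N else nth 0 C i.
Proof. move=> pq; rewrite /swapb nth_set_nth /=; case: eqP => // _; by rewrite nth_set_nth. Qed.

Lemma swap_xi m C p q i : (p < q)%N -> (m * q <= nth 0 C q + m * p)%N ->
  xi m (swapb m C p q) i = xi m C (sw p q i).
Proof.
move=> pq hq; rewrite /xi swap_nth // /sw.
have mpq : (m * p <= m * q)%N by rewrite leq_mul2l ltnW ?orbT.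
case: (i =P q) => [->|iq]; first by rewrite (gtn_eqF pq); apply/eqP; rewrite subr_eq; apply/eqP; lia.
case: (i =P p) => [->|ip] //.
apply/eqP; rewrite subr_eq; apply/eqP; lia.
Qed.

Lemma swap_prod m C p q (x : int) : (p < q)%N -> (q < size C)%N ->
  (m * q <= nth 0 C q + m * p)%N ->
  (\prod_(0 <= i < size (swapb m C p q)) (x - xi m (swapb m C p q) i) =
   \prod_(0 <= i < size C) (x - xi m C i))%R.
Proof.
move=> pq qn hq; have pn := ltn_trans pq qn.
rewrite swap_size //.
rewrite (eq_big_nat _ _ (F2 := fun i => (x - xi m C (sw p q i))%R)); last first.
  by move=> i _; rewrite swap_xi.
set n := size C.
rewrite !big_mkord.
pose p' : 'I_n := Ordinal pn; pose q' : 'I_n := Ordinal qn.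
rewrite [RHS](reindex_inj (@perm_inj _ (tperm p' q'))).
apply: eq_bigr => i _; congr (_ - xi m C _)%R.
rewrite /sw; case: tpermP => [->|->|ip iq] /=; first by rewrite eqxx.
  by rewrite (gtn_eqF pq) eqxx.
have /negbTE -> : (i : nat) != p by apply/eqP => e; apply: ip; apply: val_inj.
by have /negbTE -> : (i : nat) != q by apply/eqP => e; apply: iq; apply: val_inj.
Qed.

Lemma swap_edge m C p q : (p < q)%N -> (q < size C)%N ->
  (m * q <= nth 0 C q + m * p)%N -> (xi m C p < xi m C q)%R ->
  graph_edge C (swapb m C p q).
Proof.
move=> pq qn hq hlt; have pn := ltn_trans pq qn.
rewrite /graph_edge /pad /= !swap_size // maxnn subnn /=.
move: hlt; rewrite /xi => hlt.
have h1 : (nth 0 C q + m * p < nth 0 C p + m * q)%N by lia.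
exists p, q, (nth 0 C p + m * q - m * p - nth 0 C q)%N; split.
  split => //; [by rewrite neq_ltn pq | lia].
split.
- rewrite swap_nth // (ltn_eqF pq); rewrite eqxx; lia.
- rewrite swap_nth // eqxx; lia.
- move=> l ln lp lq; rewrite swap_nth // (negbTE lp) (negbTE lq) //.
Qed.

Lemma chain (f : nat -> int) a b : (forall i, (a <= i)%N -> (i.+1 < b)%N -> (f i.+1 <= f i)%R) ->
  forall i i', (a <= i)%N -> (i <= i')%N -> (i' < b)%N -> (f i' <= f i)%R.
Proof.
move=> h i i' ai; elim: i' => [|i' IH] ii' i'b.
  by move: ii'; rewrite leqn0 => /eqP ->.
move: ii'; rewrite leq_eqVlt => /orP[/eqP -> //|]; rewrite ltnS => ii'.
apply: le_trans (IH ii' (ltnW i'b)); apply: h => //; exact: leq_trans ai ii'.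
Qed.

Lemma swap_R m C p q : (p < q)%N -> (q < size C)%N -> (m * q <= nth 0 C q + m * p)%N ->
  (forall i, (i.+1 < size C)%N -> Rr m (xi m C i) (xi m C i.+1)) ->
  (0 < p)%N -> (xi m C q <= xi m C p.-1)%R -> (xi m C p < xi m C q)%R ->
  (forall i, (q < i)%N -> (i < size C)%N -> (xi m C i <= xi m C p)%R) ->
  forall i, (i.+1 < size (swapb m C p q))%N ->
    Rr m (xi m (swapb m C p q) i) (xi m (swapb m C p q) i.+1).
Proof.
move=> pq qn hq h p0 hq1 hlt hmax i; rewrite swap_size ?(ltn_trans pq qn) // => hi.
rewrite !swap_xi //.
have swp : sw p q p = q by rewrite /sw eqxx.
have swq : sw p q q = p by rewrite /sw (gtn_eqF pq) eqxx.
have swo : forall k, k != p -> k != q -> sw p q k = k.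
  by move=> k kp kq; rewrite /sw (negbTE kp) (negbTE kq).
case: (i =P p) => [->|nip].
  rewrite swp; case: (p.+1 =P q) => [e|ne].
    rewrite e swq; apply: Rr_le; exact: ltW.
  rewrite swo; last by apply/eqP.
    apply: Rr_l (h p (leq_ltn_trans pq qn)) _; exact: ltW.
  by rewrite neq_ltn ltnSn orbT.
have ip : i != p by apply/eqP.
case: (i =P q) => [eiq|niq].
  rewrite eiq in hi *; rewrite swq swo; first last.
  - by rewrite neq_ltn ltnSn orbT.
  - by rewrite neq_ltn ltnS (ltnW pq) orbT.
  apply: Rr_le; apply: hmax; [exact: ltnSn | exact: hi].
have iq : i != q by apply/eqP.
rewrite (swo i ip iq).
case: (i.+1 =P p) => [e|ne].
  rewrite e swp; apply: Rr_le; move: hq1; by rewrite -e.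
case: (i.+1 =P q) => [e|ne'].
  rewrite e swq; apply: Rr_r (h i hi) _.
  by rewrite e; apply: ltW.
rewrite swo; [exact: h | by apply/eqP | by apply/eqP].
Qed.


Lemma rook_trans m B C D : rook_equiv m B C -> rook_equiv m C D -> rook_equiv m B D.
Proof. by move=> h1 h2 k; rewrite h1 h2. Qed.

Section Main.
Variables (m : nat) (B : seq nat) (j : nat).
Hypotheses (m0 : (0 < m)%N) (jn : (j < size B)%N).
Local Notation n := (size B).
Local Notation M := (xi m B j).
Local Notation V := (graph_vertex m B).

Definition Inv C p := [/\ size C = n /\ V C, (j < p <= n)%N,
  (forall i, (j <= i)%N -> (i.+1 < p)%N -> (xi m C i.+1 <= xi m C i)%R),
  (forall i, (p <= i)%N -> (i < n)%N -> (xi m C i <= xi m C p.-1)%R) &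
  (forall i, (i <= j)%N -> xi m C i = xi m B i)].

Definition GoalP C := exists D, [/\ size D = n, connected V graph_edge C D,
  (forall i, (i <= j)%N -> xi m D i = xi m C i) &
  (forall i i', (j <= i)%N -> (i <= i')%N -> (i' < n)%N -> (xi m D i' <= xi m D i)%R)].

Lemma done_case C : Inv C n -> GoalP C.
Proof.
case=> [[sC VC] _ hs _ _]; exists C; split => //.
  exact: conn_refl.
move=> i i' ji ii' i'n; exact: (chain hs ji ii' i'n).
Qed.

Lemma Inv_top C p : Inv C p -> (xi m C p.-1 <= M)%R /\ (M <= (m * p)%:Z)%R.
Proof.
case=> [[sC VC] /andP[jp pn] hs _ hpre]; split.
  rewrite -(hpre j (leqnn j)); apply: (chain hs (leqnn j)).
    by rewrite -ltnS prednK // (leq_ltn_trans _ jp).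
  by rewrite prednK // (leq_ltn_trans _ jp).
rewrite /xi; have : (m * j <= m * p)%N by rewrite leq_mul2l (ltnW jp) orbT.
lia.
Qed.

Lemma next_case C p : Inv C p -> (p < n)%N ->
  (forall i, (p < i)%N -> (i < n)%N -> (xi m C i <= xi m C p)%R) -> Inv C p.+1.
Proof.
case=> [[sC VC] /andP[jp pn] hs hd hpre] pn' hmax; split => //.
- by rewrite ltnS (ltnW jp) pn'.
- move=> i ji; rewrite ltnS leq_eqVlt => /orP[/eqP e|]; last exact: hs.
  have -> : i = p.-1 by rewrite -e.
  rewrite prednK ?(leq_ltn_trans _ jp) //; by apply: hd.
Qed.

Lemma swap_case C p q : Inv C p -> (p < q)%N -> (q < n)%N -> (xi m C p < xi m C q)%R ->
  (forall i, (q < i)%N -> (i < n)%N -> (xi m C i <= xi m C p)%R) ->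
  [/\ Inv (swapb m C p q) p, graph_edge C (swapb m C p q),
      xi m (swapb m C p q) p = xi m C q &
      (forall i, (i <= j)%N -> xi m (swapb m C p q) i = xi m C i)].
Proof.
move=> hI pq qn hlt hmax; have hI0 := hI.
case: hI => [[sC [bC sgC reB]] /andP[jp pn] hs hd hpre].
have pn' := ltn_trans pq qn.
have p0 : (0 < p)%N by apply: leq_ltn_trans jp.
have [top1 top2] := Inv_top hI0.
have hq1 : (xi m C q <= xi m C p.-1)%R by apply: hd => //; exact: ltnW.
have hxq : (xi m C q <= (m * p)%:Z)%R by apply: le_trans hq1 (le_trans top1 top2).
have hqn : (m * q <= nth 0 C q + m * p)%N by move: hxq; rewrite /xi; lia.
have qn' : (q < size C)%N by rewrite sC.
have hR := (@char m C m0).1 (conj bC sgC).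
have hmax' : forall i, (q < i)%N -> (i < size C)%N -> (xi m C i <= xi m C p)%R.
  by move=> i; rewrite sC; apply: hmax.
have hR' := @swap_R m C p q pq qn' hqn hR p0 hq1 hlt hmax'.
have [bC' sgC'] := (@char m (swapb m C p q) m0).2 hR'.
have ss : size (swapb m C p q) = size C by apply: swap_size => //; rewrite sC.
have re : rook_equiv m C (swapb m C p q).
  apply: RE => //.
  by move=> x; rewrite swap_prod.
have swo : forall k, (k < p)%N -> sw p q k = k.
  by move=> k kp; rewrite /sw (ltn_eqF kp) (ltn_eqF (ltn_trans kp pq)).
have sw_rng : forall i, (p <= i)%N -> (i < n)%N -> (p <= sw p q i)%N && (sw p q i < n)%N.
  move=> i pi ii; rewrite /sw; case: eqP => _; first by rewrite (ltnW pq) qn.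
  by case: eqP => _; rewrite ?leqnn ?pn' ?pi ?ii.
have pre' : forall i, (i <= j)%N -> xi m (swapb m C p q) i = xi m C i.
  by move=> i ij; rewrite swap_xi // swo // (leq_ltn_trans ij jp).
split => //.
- split; first by split; [rewrite ss | split => //; exact: rook_trans re].
  + by rewrite jp pn.
  + move=> i ji ip; rewrite !swap_xi // !swo //; [exact: hs | exact: ltn_trans ip].
  + move=> i pi ii; rewrite !swap_xi // (swo p.-1); last by rewrite prednK // leqnn.
    by have /andP[h1 h2] := sw_rng i pi ii; apply: hd.
  + by move=> i ij; rewrite pre' // hpre.
- exact: swap_edge.
- by rewrite swap_xi // /sw eqxx.
Qed.

Lemma goal_back C C' : V C -> graph_edge C C' -> GoalP C' ->
  (forall i, (i <= j)%N -> xi m C' i = xi m C i) -> GoalP C.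
Proof.
move=> VC e [D [sD cD pD sortD]] pre; exists D; split => //.
  exact: conn_step cD.
by move=> i ij; rewrite pD // pre.
Qed.

Lemma main_ind d : forall C p, (n - p)%N = d -> Inv C p -> GoalP C.
Proof.
elim: d => [|d IHd] C p hd hI.
  have pn : p = n.
    by case: hI => _ /andP[_ pn] _ _ _; apply/eqP; rewrite eqn_leq pn /= -subn_eq0 hd.
  by rewrite pn in hI; apply: done_case.
have pn : (p < n)%N by rewrite -subn_gt0 hd.
suff : forall e C, (absz (M - xi m C p) < e)%N -> Inv C p -> GoalP C.
  by move=> /(_ _ C (ltnSn _)); apply.
clear C hI; elim=> [|e IHe] C he hI //.
set P := fun i => ((p < i)%N && (i < n)%N) && (xi m C p < xi m C i)%R.
case: (boolP [exists i : 'I_n, P i]) => [/existsP[i0 Pi0]|hn].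
  have exP : exists i, P i by exists i0.
  have bnd : forall i, P i -> (i <= n)%N by move=> i /andP[/andP[_ /ltnW]].
  case: (ex_maxnP exP bnd) => q /andP[/andP[pq qn] hlt] qmax.
  have hmax : forall i, (q < i)%N -> (i < n)%N -> (xi m C i <= xi m C p)%R.
    move=> i qi ii; rewrite leNgt; apply/negP => h.
    have : P i by rewrite /P (ltn_trans pq qi) ii h.
    by move=> /qmax; rewrite leqNgt qi.
  have [hI' e' xp pre] := swap_case hI pq qn hlt hmax.
  apply: (goal_back (C' := swapb m C p q)) => //.
    by case: hI => -[_ ?].
  apply: IHe => //.
  have [top1 _] := Inv_top hI.
  have hq1 : (xi m C q <= xi m C p.-1)%R.
    by case: hI => _ _ _ hd' _; apply: hd' => //; exact: ltnW.
  have hqM := le_trans hq1 top1.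
  rewrite xp; move: he hqM hlt; lia.
apply: IHd (p.+1) _ _; first by rewrite subnS hd.
apply: next_case => // i pi ii; rewrite leNgt; apply/negP => h.
move: hn; rewrite negb_exists => /forallP /(_ (Ordinal ii)).
by rewrite /P /= pi ii h.
Qed.

End Main.

Lemma rv_nth m (C : seq nat) i : (i < size C)%N -> nth 0%R (root_vec m C) i = xi m C i.
Proof.
move=> hi; rewrite /root_vec (nth_map 0%N) ?size_iota // nth_iota //.
Qed.

Theorem lemma19 (m : nat) (B : seq nat) (j : nat) :
  0 < m -> is_board B -> singleton m B ->
  j < size B ->
  (forall i, i < size B -> (nth 0%R (root_vec m B) i <= nth 0%R (root_vec m B) j)%R) ->
  (forall i, i < j -> (nth 0%R (root_vec m B) i < nth 0%R (root_vec m B) j)%R) ->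
  exists B' : seq nat,
    [/\ size B' = size B,
        connected (graph_vertex m B) graph_edge B B',
        (forall i, i <= j -> nth 0%R (root_vec m B') i = nth 0%R (root_vec m B) i) &
        (forall i i', j <= i -> i <= i' -> i' < size B ->
           (nth 0%R (root_vec m B') i' <= nth 0%R (root_vec m B') i)%R)].
Proof.
move=> m0 hB hsg jn hmax _.
have hI : Inv m B j B j.+1.
  split.
  - by split => //; split => // k.
  - by rewrite ltnSn jn.
  - by move=> i ji; rewrite ltnS => /(leq_ltn_trans ji); rewrite ltnn.
  - move=> i ji ii; rewrite /= -!rv_nth //; exact: hmax.
  - by [].
have [D [sD cD pD sortD]] := main_ind m0 jn (erefl _) hI.
exists D; split => //.
- move=> i ij; have ii := leq_ltn_trans ij jn.
  by rewrite !rv_nth ?sD // pD.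
- move=> i i' ji ii' i'n; have iin := leq_ltn_trans ii' i'n.
  by rewrite !rv_nth ?sD //; apply: sortD.
Qed.
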